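(* Let $a,b,c\in\mathbb{R}$ with $c\neq 0$, and let $c_{1,2}=-\frac{2}{27}a^3+\frac13 ab\pm\frac{2}{27}\sqrt{(a^2-3b)^3}$ (defined when $b\le a^2/3$; upper sign for $c_1$). The cubic $x^3+ax^2+bx+c$ has three positive real roots (counted with multiplicity) if and only if $a<0$ and either (i) $0<b\le a^2/4$ and $c_2\le c<0$, or (ii) $a^2/4<b\le a^2/3$ and $c_2\le c\le c_1<0$. *)

(* Defs.v *)
From HB Require Import structures.
From mathcomp Require Import all_boot all_order all_algebra.
Set Implicit Arguments. Unset Strict Implicit. Unset Printing Implicit Defensive.
Import Order.TTheory GRing.Theory Num.Theory.
Local Open Scope ring_scope.

Definition cubic (R : ringType) (a b c : R) : {poly R} :=
  'X^3 + a%:P * 'X^2 + b%:P * 'X + c%:P.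

(* c_1 (upper sign) and c_2 (lower sign); meaningful when b <= a^2/3. *)
Definition c1 (R : rcfType) (a b : R) : R :=
  - (2 / 27) * a ^+ 3 + (1 / 3) * a * b + (2 / 27) * Num.sqrt ((a ^+ 2 - 3 * b) ^+ 3).
Definition c2 (R : rcfType) (a b : R) : R :=
  - (2 / 27) * a ^+ 3 + (1 / 3) * a * b - (2 / 27) * Num.sqrt ((a ^+ 2 - 3 * b) ^+ 3).

Definition three_pos_roots (R : rcfType) (p : {poly R}) : Prop :=
  exists r1 r2 r3 : R, [/\ 0 < r1, 0 < r2, 0 < r3 &
    p = ('X - r1%:P) * ('X - r2%:P) * ('X - r3%:P)].

(* Main.v *)
Require Import Defs.
From HB Require Import structures.
From mathcomp Require Import all_boot all_order all_algebra.
From mathcomp Require Import ring lra.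
Import Order.TTheory GRing.Theory Num.Theory.
Local Open Scope ring_scope.

Ltac fin E := match type of E with ?l = ?r => transitivity l; [ring | rewrite E; ring] end.

Section Aux.
Variable R : rcfType.
Implicit Types a b c : R.

Lemma ext (a b c r1 r2 r3 : R) :
  ('X^3 + a%:P * 'X^2 + b%:P * 'X + c%:P : {poly R}) = ('X - r1%:P) * ('X - r2%:P) * ('X - r3%:P) ->
  [/\ a = -(r1+r2+r3), b = r1*r2+r1*r3+r2*r3 & c = - (r1*r2*r3)].
Proof.
move=> hp.
have E0 : c = - r1 * - r2 * - r3.
  by have := congr1 (horner^~ 0) hp; rewrite !(hornerD, hornerCM, hornerM, hornerC, hornerX, hornerXn, hornerN, hornerMX) => E; fin E.
have E1 : 1 + a + b + c = (1-r1)*(1-r2)*(1-r3).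
  by have := congr1 (horner^~ 1) hp; rewrite !(hornerD, hornerCM, hornerM, hornerC, hornerX, hornerXn, hornerN, hornerMX) => E; fin E.
have E2 : -1 + a - b + c = (-1-r1)*(-1-r2)*(-1-r3).
  by have := congr1 (horner^~ (-1)) hp; rewrite !(hornerD, hornerCM, hornerM, hornerC, hornerX, hornerXn, hornerN, hornerMX) => E; fin E.
split; lra.
Qed.

Lemma hev a b c x : (cubic a b c).[x] = x^+3 + a * x^+2 + b * x + c.
Proof. by rewrite /cubic !(hornerD, hornerCM, hornerM, hornerC, hornerX, hornerXn). Qed.

Lemma sq3 (x : R) : 0 <= x -> Num.sqrt (x^+3) = Num.sqrt x ^+ 3.
Proof.
move=> hx; rewrite -{1}(sqr_sqrtr hx) -exprM mulnC exprM sqrtr_sqr ger0_norm //.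
by rewrite exprn_ge0 // sqrtr_ge0.
Qed.

Definition mm a b := - (2 / 27) * a ^+ 3 + (1 / 3) * a * b.

Lemma c1E a b : 3 * b <= a^+2 ->
  c1 a b = mm a b + 2/27 * (Num.sqrt (a^+2 - 3 * b))^+3.
Proof. by move=> h; rewrite /c1 /mm sq3 // subr_ge0. Qed.

Lemma c2E a b : 3 * b <= a^+2 ->
  c2 a b = mm a b - 2/27 * (Num.sqrt (a^+2 - 3 * b))^+3.
Proof. by move=> h; rewrite /c2 /mm sq3 // subr_ge0. Qed.

Definition PP a b c := [/\ a < 0, 0 < b, 3 * b <= a^+2, c < 0 &
   c2 a b <= c <= c1 a b].

Lemma P_RHS a b c : PP a b c ->
  (0 < b <= a ^+ 2 / 4 /\ c2 a b <= c < 0) \/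
   (a ^+ 2 / 4 < b <= a ^+ 2 / 3 /\ c2 a b <= c /\ c <= c1 a b /\ c1 a b < 0).
Proof.
case=> ha hb h3 hc /andP[h1 h2].
have [hb4|hb4] := lerP b (a^+2/4).
  by left; split; apply/andP; split.
right; split; first (apply/andP; split => //; lra).
split => //; split => //.
move: h1 h2; rewrite c1E // c2E // => h1 h2.
set s := Num.sqrt _ in h1 h2 *.
have hs0 : 0 <= s by rewrite sqrtr_ge0.
have hs : s^+2 = a^+2 - 3 * b by rewrite sqr_sqrtr // subr_ge0.
have hbb : b = (a^+2 - s^+2) / 3 by rewrite hs; field.
set t := 2/27 * s^+3.
have ht0 : 0 <= t by rewrite /t; apply: mulr_ge0; [lra | apply: exprn_ge0].
have hm : mm a b < 0.
  rewrite /mm; have : 0 < 9 * b - 2 * a^+2 by lra.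
  move=> h; have : a * (9 * b - 2 * a^+2) < 0 by rewrite nmulr_rlt0.
  lra.
have key : mm a b ^+2 - t^+2 = b^+2 * (4 * b - a^+2) / 27.
  by rewrite /t /mm hbb; field.
have : 0 < b^+2 * (4 * b - a^+2) / 27.
  apply: divr_gt0 => //; apply: mulr_gt0; [exact: exprn_gt0 | lra].
rewrite -key => hk.
nra.
Qed.

Lemma RHS_P a b c : a < 0 ->
  (0 < b <= a ^+ 2 / 4 /\ c2 a b <= c < 0) \/
   (a ^+ 2 / 4 < b <= a ^+ 2 / 3 /\ c2 a b <= c /\ c <= c1 a b /\ c1 a b < 0) ->
  PP a b c.
Proof.
move=> ha [[/andP[hb hb4] /andP[h1 hc]] | [/andP[hb4 hb3] [h1 [h2 h3]]]].
- have h3 : 3 * b <= a^+2 by have := sqr_ge0 a; lra.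
  split => //; apply/andP; split => //.
  rewrite c1E //.
  set s := Num.sqrt _.
  have hs0 : 0 <= s by rewrite sqrtr_ge0.
  have hs : s^+2 = a^+2 - 3 * b by rewrite sqr_sqrtr // subr_ge0.
  have hbb : b = (a^+2 - s^+2) / 3 by rewrite hs; field.
  set t := 2/27 * s^+3.
  have ht0 : 0 <= t by rewrite /t; apply: mulr_ge0; [lra | apply: exprn_ge0].
  have key : t^+2 - mm a b ^+2 = b^+2 * (a^+2 - 4 * b) / 27.
    by rewrite /t /mm hbb; field.
  have : 0 <= b^+2 * (a^+2 - 4 * b) / 27.
    apply: divr_ge0 => //; apply: mulr_ge0; [exact: sqr_ge0 | lra].
  rewrite -key => hk.
  nra.
- have h3' : 3 * b <= a^+2 by lra.
  have hsq := sqr_ge0 a.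
  split => //; [lra | lra | by apply/andP].
Qed.

Lemma roots_P a b c : three_pos_roots (cubic a b c) -> PP a b c.
Proof.
case=> r1 [r2 [r3 [h1 h2 h3 hp]]].
have [ea eb ec] := @ext a b c r1 r2 r3 hp.
have h3b : 3 * b <= a^+2.
  rewrite ea eb.
  have := sqr_ge0 (r1 - r2); have := sqr_ge0 (r1 - r3); have := sqr_ge0 (r2 - r3).
  lra.
split.
- lra.
- rewrite eb; have := mulr_gt0 h1 h2; have := mulr_gt0 h1 h3; have := mulr_gt0 h2 h3; lra.
- exact: h3b.
- rewrite ec; have := mulr_gt0 (mulr_gt0 h1 h2) h3; lra.
rewrite c1E // c2E //.
set s := Num.sqrt _.
have hs0 : 0 <= s by rewrite sqrtr_ge0.
have hs : s^+2 = a^+2 - 3 * b by rewrite sqr_sqrtr // subr_ge0.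
set t := 2/27 * s^+3.
have ht0 : 0 <= t by rewrite /t; apply: mulr_ge0; [lra | apply: exprn_ge0].
have key : t^+2 - (c - mm a b)^+2 = ((r1 - r2) * (r1 - r3) * (r2 - r3))^+2 / 27.
  have e : t^+2 = 4/729 * (s^+2)^+3 by rewrite /t; field.
  rewrite e.
  by rewrite hs /mm ea eb ec; field.
have : 0 <= ((r1 - r2) * (r1 - r3) * (r2 - r3))^+2 / 27.
  by apply: divr_ge0 => //; apply: sqr_ge0.
rewrite -key => hk.
apply/andP; split; nra.
Qed.

Lemma Fneg a b c x : a < 0 -> 0 < b -> c < 0 -> x <= 0 ->
  x^+3 + a * x^+2 + b * x + c < 0.
Proof.
move=> ha hb hc hx.
have h1 : x^+3 <= 0 by rewrite exprS mulr_le0_ge0 ?sqr_ge0.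
have h2 : a * x^+2 <= 0 by rewrite mulr_le0_ge0 ?sqr_ge0 // ltW.
have h3 : b * x <= 0 by rewrite mulr_ge0_le0 // ltW.
lra.
Qed.

Lemma P_roots a b c : PP a b c -> three_pos_roots (cubic a b c).
Proof.
case=> ha hb h3 hc /andP[h1 h2].
move: h1 h2; rewrite c1E // c2E // => h1 h2.
set s := Num.sqrt _ in h1 h2.
have hs0 : 0 <= s by rewrite sqrtr_ge0.
have hs : s^+2 = a^+2 - 3 * b by rewrite sqr_sqrtr // subr_ge0.
have hbb : b = (a^+2 - s^+2) / 3 by rewrite hs; field.
pose F x := x^+3 + a * x^+2 + b * x + c.
pose x1 := (- a - s) / 3.
pose x2 := (- a + s) / 3.
have hF1 : 0 <= F x1.
  have -> : F x1 = c - (mm a b - 2/27 * s^+3).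
    by rewrite /F /x1 /mm hbb; field.
  lra.
have hF2 : F x2 <= 0.
  have -> : F x2 = c - (mm a b + 2/27 * s^+3).
    by rewrite /F /x2 /mm hbb; field.
  lra.
have [M hMdef] : exists M, M = 1 + `|a| + `|b| + `|c| + s by eexists.
have na := ler_norm (-a); rewrite normrN in na.
have nb := ler_norm (-b); rewrite normrN in nb.
have nc := ler_norm (-c); rewrite normrN in nc.
have na0 := normr_ge0 a; have nb0 := normr_ge0 b; have nc0 := normr_ge0 c.
have hM1 : 1 <= M by lra.
have hFM : 0 <= F M.
  rewrite /F.
  have e0 : 0 <= M^+2 * (M - `|a| - `|b| - `|c|) by apply: mulr_ge0; [apply: sqr_ge0 | lra].
  have e1 : 0 <= (a + `|a|) * M^+2 by apply: mulr_ge0; [lra | apply: sqr_ge0].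
  have e2 : 0 <= (b + `|b|) * M by apply: mulr_ge0; lra.
  have e3 : 0 <= `|b| * (M - 1) * M by apply: mulr_ge0; [apply: mulr_ge0|]; lra.
  have e4 : 0 <= `|c| * (M - 1) * (M + 1) by apply: mulr_ge0; [apply: mulr_ge0|]; lra.
  lra.
have hx2M : x2 <= M.
  rewrite /x2; lra.
have [r3 /andP[hr3a hr3b] hr3] : exists2 x, x2 <= x <= M & root (cubic a b c) x.
  by apply: poly_ivt => //; rewrite !hev; apply/andP; split.
move: hr3; rewrite rootE hev => /eqP hF3.
have hx12 : x1 <= x2 by rewrite /x1 /x2; lra.
pose p := a + r3.
pose r := b + r3 * p.
have hq : forall x, F x = (x - r3) * (x^+2 + p * x + r).
  move=> x; have hF3' : F r3 = 0 by exact: hF3.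
  have e : F x = (x - r3) * (x^+2 + p * x + r) + F r3 by rewrite /F /r /p; ring.
  by rewrite e hF3' addr0.
have hq1 : x1^+2 + p * x1 + r <= 0.
  have [hlt|hge] := ltrP x1 r3.
    have := hq x1; move: hF1 => /[swap] -> hF1.
    nra.
  have e : r3 = x1 by apply/eqP; rewrite eq_le hge /=; lra.
  have -> : x1^+2 + p * x1 + r = 3 * x1^+2 + 2 * a * x1 + b by rewrite /r /p e; ring.
  by rewrite /x1 hbb le_eqVlt; apply/orP; left; apply/eqP; field.
pose D := p^+2 - 4 * r.
have hD : 0 <= D.
  have := sqr_ge0 (2 * x1 + p); rewrite /D; lra.
pose d := Num.sqrt D.
have hd : d^+2 = D by rewrite sqr_sqrtr.
pose u := (- p - d) / 2.
pose v := (- p + d) / 2.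
have hpuv : p = - (u + v) by rewrite /u /v; field.
have hruv : r = u * v.
  have -> : u * v = (p^+2 - d^+2) / 4 by rewrite /u /v; field.
  by rewrite hd /D; field.
have hFu : F u = 0 by rewrite hq hpuv hruv; ring.
have hFv : F v = 0 by rewrite hq hpuv hruv; ring.
have pos : forall z, F z = 0 -> 0 < z.
  move=> z hz; rewrite ltNge; apply/negP => hz0.
  by have := @Fneg a b c z ha hb hc hz0; rewrite -/(F z) hz ltxx.
exists u, v, r3; split; try exact: pos.
have ea : a = p - r3 by rewrite /p; ring.
have eb : b = r - r3 * p by rewrite /r; ring.
have ec : c = - (r3 * r).
  move: hF3; rewrite /r /p => hF3; lra.
rewrite /cubic ea eb ec hruv hpuv !(polyCB, polyCN, polyCM, polyCD).
ring.
Qed.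


End Aux.

Theorem mainTheorem5 (R : rcfType) (a b c : R) (hc : c != 0) :
  three_pos_roots (cubic a b c) <->
  a < 0 /\
  ((0 < b <= a ^+ 2 / 4 /\ c2 a b <= c < 0) \/
   (a ^+ 2 / 4 < b <= a ^+ 2 / 3 /\ c2 a b <= c /\ c <= c1 a b /\ c1 a b < 0)).
Proof.
split.
- move=> h; have hP := @roots_P R a b c h.
  by case: (hP) => ha _ _ _ _; split => //; apply: P_RHS.
- by case=> ha h; apply: P_roots; apply: RHS_P.
Qed.
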